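(* For every integer $n\ge 2$, the path $P_n$ on $n$ vertices satisfies $IDI(P_n)=2$.
   Context: For a finite simple connected graph $G=(V,E)$ with diameter $d$, a rank assignment is a function $f:V\to\mathbb{R}$; under $f$, the string of a vertex $v$ is the $d$-vector whose $i$-th coordinate is the sum of $f(w)$ over all vertices $w$ with $d(v,w)=i$. The ID-index $IDI(G)$ is the minimum $k$ such that there exists $f:V\to\mathbb{R}$ with $|f(V)|=k$ under which all vertices have distinct strings. *)

(* Defs.v *)
From HB Require Import structures.
From mathcomp Require Import all_boot all_order all_algebra.
From mathcomp Require Import Rstruct.
From Stdlib Require Rdefinitions.
Notation R := Rdefinitions.R.

Set Implicit Arguments.
Unset Strict Implicit.
Unset Printing Implicit Defensive.

Import Order.TTheory GRing.Theory Num.Theory.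
Local Open Scope ring_scope.

Definition simple_graph (T : finType) (e : rel T) : Prop :=
  symmetric e /\ irreflexive e.

Definition connected_graph (T : finType) (e : rel T) : Prop :=
  forall x y : T, connect e x y.

Definition has_walk (T : finType) (e : rel T) (x y : T) (k : nat) : bool :=
  [exists p : k.-tuple T, path e x p && (last x p == y)].

(* graph distance: least k with a walk of length k from x to y
   (for a connected graph it is < #|T|, so searching iota 0 #|T| is exact) *)
Definition gdist (T : finType) (e : rel T) (x y : T) : nat :=
  find (has_walk e x y) (iota 0 #|T|).

Definition diameter (T : finType) (e : rel T) : nat :=
  (\max_(x : T) \max_(y : T) gdist e x y)%N.

(* the string of v under f : the d-vector (d = diameter) whose i-th coordinate
   (i = 1..d) is the sum of f w over the w at distance i from v *)
Definition gstring (T : finType) (e : rel T) (f : T -> R) (v : T) : seq R :=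
  [seq \sum_(w : T | gdist e v w == i) f w | i <- iota 1 (diameter e)].

Definition num_ranks (T : finType) (f : T -> R) : nat :=
  size (undup [seq f x | x <- enum T]).

Definition IDI_is (T : finType) (e : rel T) (k : nat) : Prop :=
  (exists f : T -> R, injective (gstring e f) /\ num_ranks f = k) /\
  (forall f : T -> R, injective (gstring e f) -> (k <= num_ranks f)%N).

Definition path_graph (n : nat) : rel 'I_n :=
  fun i j => (i.+1 == j :> nat) || (j.+1 == i :> nat).
Arguments path_graph n : clear implicits.

(* Main.v *)
Require Import Defs.
From mathcomp Require Import all_boot all_order all_algebra.
From mathcomp Require Import zify Rstruct.
Set Implicit Arguments.
Unset Strict Implicit.
Unset Printing Implicit Defensive.
Import Order.TTheory GRing.Theory Num.Theory.

Section P.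
Variable N : nat.
Local Notation e := (path_graph N).

Lemma walk_bound (p : seq 'I_N) (x : 'I_N) :
  path e x p -> (x <= last x p + size p)%N /\ (last x p <= x + size p)%N.
Proof.
elim: p x => [|y p IH] x /=; first by lia.
move=> /andP[exy /IH [h1 h2]]; move: exy; rewrite /path_graph => /orP[] /eqP; lia.
Qed.

Lemma has_walk_bound (x y : 'I_N) k :
  has_walk e x y k -> (x <= y + k)%N /\ (y <= x + k)%N.
Proof.
move=> /existsP[p /andP[hp /eqP hl]].
have := walk_bound hp; rewrite hl size_tuple; lia.
Qed.

Lemma has_walk_cons (x y z : 'I_N) k :
  e z x -> has_walk e x y k -> has_walk e z y k.+1.
Proof.
move=> ezx /existsP[p /andP[hp hl]]; apply/existsP.
exists [tuple of x :: p] => /=; by rewrite ezx hp.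
Qed.

Lemma rev_edge (x y : 'I_N) : e (rev_ord x) (rev_ord y) = e x y.
Proof.
rewrite /path_graph /=; have := ltn_ord x; have := ltn_ord y.
case: (x.+1 == y :> nat) /eqP; case: (y.+1 == x :> nat) /eqP;
case: ((N - x.+1).+1 == N - y.+1 :> nat) /eqP;
case: ((N - y.+1).+1 == N - x.+1 :> nat) /eqP => //=; lia.
Qed.

Lemma rev_walk (x y : 'I_N) k :
  has_walk e x y k -> has_walk e (rev_ord x) (rev_ord y) k.
Proof.
move=> /existsP[p /andP[hp /eqP hl]]; apply/existsP.
exists (map_tuple (@rev_ord N) p) => /=.
rewrite last_map hl eqxx andbT.
elim: (tval p) x hp {hl} => [|z q IH] x //= /andP[h1 h2].
by rewrite rev_edge h1 IH.
Qed.

Lemma rev_gdist (x y : 'I_N) : gdist e (rev_ord x) (rev_ord y) = gdist e x y.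
Proof.
rewrite /gdist; apply: eq_find => k; apply/idP/idP; last exact: rev_walk.
by move/rev_walk; rewrite !rev_ordK.
Qed.
End P.

Lemma find_iota (P : pred nat) v M : (v < M)%N -> P v ->
  (forall k, (k < v)%N -> ~~ P k) -> find P (iota 0 M) = v.
Proof.
move=> vM Pv Hk.
have -> : iota 0 M = iota 0 v ++ iota v (M - v) by rewrite -iotaD; congr iota; lia.
rewrite find_cat size_iota.
have -> : has P (iota 0 v) = false.
  apply/hasP => [[k]]; rewrite mem_iota => /andP[_ kv] Pk.
  by move: (Hk k kv); rewrite Pk.
have -> : (M - v = (M - v).-1.+1)%N by lia.
by rewrite /= Pv addn0.
Qed.
Section M.
Variable m : nat.
Local Notation N := m.+2.
Local Notation e := (path_graph N).
Local Open Scope ring_scope.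

Lemma walk_to0 k : forall v : 'I_N, val v = k -> has_walk e v ord0 k.
Proof.
elim: k => [|k IH] v hv.
  apply/existsP; exists [tuple] => /=; apply/eqP; exact: val_inj.
have kN : (k < N)%N by apply: ltnW; rewrite -hv; exact: ltn_ord.
apply: (@has_walk_cons N (inord k)); last by apply: IH; exact: inordK.
by rewrite /path_graph inordK // hv eqxx orbT.
Qed.

Lemma gdist0 (v : 'I_N) : gdist e v ord0 = val v.
Proof.
rewrite /gdist card_ord; apply: find_iota.
- exact: ltn_ord.
- exact: (walk_to0 (erefl (nat_of_ord v))).
move=> k kv; apply/negP => /has_walk_bound [h1 _]; move: h1; rewrite /= add0n => h1; by have := leq_ltn_trans h1 kv; rewrite ltnn.
Qed.

Lemma diam_ge (v : 'I_N) : (val v <= diameter e)%N.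
Proof.
rewrite /diameter -gdist0.
apply: (@leq_trans (\max_y gdist e v y)%N).
  exact: (@leq_bigmax _ (fun y => gdist e v y) ord0).
exact: (@leq_bigmax _ (fun x => \max_y gdist e x y)%N v).
Qed.

Definition f0 (w : 'I_N) : R := if w == ord0 then 1 else 0.

Lemma nth_string (v : 'I_N) i : (i < diameter e)%N ->
  nth 0 (gstring e f0 v) i = if val v == i.+1 then 1 else 0.
Proof.
move=> hi; rewrite /gstring (nth_map 0%N); last by rewrite size_iota.
rewrite nth_iota // add1n big_mkcond (bigD1 ord0) //= big1 ?addr0.
  by rewrite gdist0 /f0 eqxx; case: ifP.
by move=> w /negbTE hw; rewrite /f0 hw; case: ifP.
Qed.

Lemma inj_aux (u v : 'I_N) : gstring e f0 u = gstring e f0 v -> val u != 0%N -> u = v.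
Proof.
move=> h u0; have hd : ((val u).-1 < diameter e)%N by have := diam_ge u; lia.
have := nth_string u hd; rewrite h nth_string // prednK ?lt0n // eqxx.
case: eqP => [huv|] _; first exact: val_inj.
by move/eqP; rewrite eq_sym oner_eq0.
Qed.

Lemma inj_f0 : injective (gstring e f0).
Proof.
move=> u v h; case: (eqVneq (val u) 0%N) => hu; last exact: inj_aux.
case: (eqVneq (val v) 0%N) => hv; first by apply: val_inj; rewrite hu hv.
by symmetry; apply: inj_aux.
Qed.

Lemma ranks_f0 : num_ranks f0 = 2%N.
Proof.
rewrite /num_ranks.
have -> : 2%N = size [:: (1:R); (0:R)] by [].
apply: perm_size; apply: uniq_perm; rewrite ?undup_uniq //=.
  by rewrite in_cons in_nil oner_eq0.
move=> x; rewrite mem_undup !inE; apply/mapP/idP.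
  by move=> [w _ ->]; rewrite /f0; case: ifP; rewrite eqxx ?orbT.
case/orP=> /eqP ->.
  by exists ord0; rewrite ?mem_enum // /f0 eqxx.
by exists ord_max; rewrite ?mem_enum // /f0.
Qed.

Lemma size_le1 (T : eqType) (s : seq T) a b :
  (size s <= 1)%N -> a \in s -> b \in s -> a = b.
Proof.
case: s => [|c [|]] //= _; rewrite !inE => /eqP -> /eqP -> //.
Qed.

Lemma lower (f : 'I_N -> R) : injective (gstring e f) -> (2 <= num_ranks f)%N.
Proof.
move=> inj; rewrite leqNgt; apply/negP => hs.
have cst : forall x, f x = f ord0.
  move=> x; apply: (size_le1 (s := undup [seq f x | x <- enum 'I_N])).
  - by rewrite -ltnS.
  - by rewrite mem_undup; apply: map_f; rewrite mem_enum.
  - by rewrite mem_undup; apply: map_f; rewrite mem_enum.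
have : gstring e f ord0 = gstring e f (rev_ord ord0).
  rewrite /gstring; apply: eq_map => i.
  rewrite [RHS](reindex_inj (@rev_ord_inj N)) /=.
  apply: eq_big => w; first by rewrite rev_gdist.
  by move=> _; rewrite (cst (rev_ord w)) cst.
move/inj/(congr1 val) => /=; lia.
Qed.
End M.

Theorem mainTheorem7 (n : nat) (hn : (2 <= n)%N) : IDI_is (path_graph n) 2.
Proof.
case: n hn => [|[|m]] // _; split.
  by exists (@f0 m); split; [exact: inj_f0 | exact: ranks_f0].
exact: lower.
Qed.
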